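(* For every $k\ge1$ there is a canonical isomorphism $\operatorname{coker}\beta^{(k)}\cong\mathcal I^kH^2(C)/\mathcal I^{k+1}H^2(C)$.
   Context: Let $\mathcal R$ be a (possibly non-commutative) ring, $\mathcal I\subset\mathcal R$ a two-sided ideal, and $C=[C^1\xrightarrow{d}C^2]$ a complex of left $\mathcal R$-modules concentrated in degrees 1 and 2, so $H^2(C)=\operatorname{coker}d$. The filtration $\{\mathcal I^iC\}_{i\ge0}$ gives a spectral sequence with $Z_k^{i,j}=\ker(\mathcal I^iC^{i+j}\xrightarrow{d}C^{i+j+1}/\mathcal I^{i+k}C^{i+j+1})$, $B_k^{i,j}=\mathcal I^iC^{i+j}\cap d(\mathcal I^{i-k}C^{i+j-1})$ ($\mathcal I^m=\mathcal R$ for $m\le0$), $E_k^{i,j}=Z_k^{i,j}/(Z_{k-1}^{i+1,j-1}+B_{k-1}^{i,j})$, differentials $d_k^{i,j}:E_k^{i,j}\to E_k^{i+k,j+1-k}$ induced by $d$. The $k$-th derived Bockstein map is $\beta^{(k)}=d_k^{0,1}:E_k^{0,1}\to E_k^{k,2-k}$. *)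

(* Defs.v *)
From HB Require Import structures.
From mathcomp Require Import all_boot all_order all_algebra.
Set Implicit Arguments. Unset Strict Implicit. Unset Printing Implicit Defensive.
Import GRing.Theory.
Local Open Scope ring_scope.

(* Subsets are Prop-valued predicates (submodules of non-noetherian modules
   need not be decidable). *)
Definition pset (T : Type) := T -> Prop.

Definition two_sided_ideal (R : pzRingType) (I : pset R) : Prop :=
  [/\ I 0,
      (forall a b, I a -> I b -> I (a - b)),
      (forall r a, I a -> I (r * a)) &
      (forall r a, I a -> I (a * r))].

Fixpoint Ipow (R : pzRingType) (I : pset R) (n : nat) : pset R :=
  match n with
  | 0%N => fun _ => True
  | n'.+1 => fun x => exists s : seq (R * R),
      (forall p, p \in s -> Ipow I n' p.1 /\ I p.2) /\
      x = \sum_(p <- s) (p.1 * p.2)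
  end.

Definition IpowZ (R : pzRingType) (I : pset R) (m : int) : pset R :=
  match m with
  | Posz n => Ipow I n
  | Negz _ => fun _ => True
  end.

Definition IM (R : pzRingType) (I : pset R) (V : lmodType R) (m : int)
    (S : pset V) : pset V :=
  fun x => exists s : seq (R * V),
    (forall p, p \in s -> IpowZ I m p.1 /\ S p.2) /\
    x = \sum_(p <- s) (p.1 *: p.2).

Definition psum (V : zmodType) (A B : pset V) : pset V :=
  fun x => exists a b, A a /\ B b /\ x = a + b.
Definition pimg (U V : Type) (f : U -> V) (A : pset U) : pset V :=
  fun y => exists x, A x /\ y = f x.

(* The complex C = [C^1 --d--> C^2] is realised inside the ambient module   *)
(* T = C^1 x C^2: the degree-n piece C^n is a submodule of T (C^1 = C1 x 0, *)
(* C^2 = 0 x C2, C^n = 0 otherwise) and the differential is                 *)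
(* D (x, y) = (0, d x), which maps C^n to C^(n+1) for every n.              *)
Definition Cdeg (R : pzRingType) (C1 C2 : lmodType R) (n : int) :
    pset (C1 * C2)%type :=
  fun x => if n == 1 then x.2 = 0
           else if n == 2 then x.1 = 0
           else x = 0.

Definition Dt (R : pzRingType) (C1 C2 : lmodType R) (d : {linear C1 -> C2})
    (x : (C1 * C2)%type) : (C1 * C2)%type := (0, d x.1).

Definition Zt (R : pzRingType) (I : pset R) (C1 C2 : lmodType R)
    (d : {linear C1 -> C2}) (k i j : int) : pset (C1 * C2)%type :=
  fun x => IM I i (@Cdeg R C1 C2 (i + j)) x /\
           IM I (i + k) (@Cdeg R C1 C2 (i + j + 1)) (Dt d x).

Definition Bt (R : pzRingType) (I : pset R) (C1 C2 : lmodType R)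
    (d : {linear C1 -> C2}) (k i j : int) : pset (C1 * C2)%type :=
  fun x => IM I i (@Cdeg R C1 C2 (i + j)) x /\
           pimg (Dt d) (IM I (i - k) (@Cdeg R C1 C2 (i + j - 1))) x.

(* A subquotient N / D of a module V, presented by the submodule N of       *)
(* representatives and the submodule D: two representatives x, y in N      *)
(* define the same element iff x - y \in D (i.e. N/(N cap D)).              *)
Record subq (V : Type) := SubQ { sq_num : pset V; sq_den : pset V }.

Definition Et (R : pzRingType) (I : pset R) (C1 C2 : lmodType R)
    (d : {linear C1 -> C2}) (k i j : int) : subq (C1 * C2)%type :=
  SubQ (Zt I d k i j)
       (psum (Zt I d (k - 1) (i + 1) (j - 1)) (Bt I d (k - 1) i j)).

Definition coker_sq (V : Type) (W : zmodType) (f : V -> W) (P : subq V) (Q : subq W)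
    : subq W :=
  SubQ (sq_num Q)
       (fun y => sq_num Q y /\ exists z, sq_num P z /\ sq_den Q (y - f z)).

Definition Ipow_sq (R : pzRingType) (I : pset R) (V : lmodType R) (m : int)
    (P : subq V) : pset V :=
  fun x => sq_num P x /\ exists s : seq (R * V),
    (forall p, p \in s -> IpowZ I m p.1 /\ sq_num P p.2) /\
    sq_den P (x - \sum_(p <- s) (p.1 *: p.2)).

Definition induces_iso (R : pzRingType) (V W : lmodType R) (f : V -> W)
    (P : subq V) (Q : subq W) : Prop :=
  [/\ (forall (a : R) (x y : V), f (a *: x + y) = a *: f x + f y),
      (forall x, sq_num P x -> sq_num Q (f x)),
      (forall x, sq_num P x -> sq_den P x -> sq_den Q (f x)),
      (forall x, sq_num P x -> sq_den Q (f x) -> sq_den P x) &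
      (forall y, sq_num Q y -> exists x, sq_num P x /\ sq_den Q (y - f x))].

Definition Csq (R : pzRingType) (C1 C2 : lmodType R) (n : int)
    : subq (C1 * C2)%type :=
  SubQ (@Cdeg R C1 C2 n) (fun x => x = 0).

Definition H2 (R : pzRingType) (C1 C2 : lmodType R) (d : {linear C1 -> C2})
    : subq (C1 * C2)%type :=
  coker_sq (Dt d) (@Csq R C1 C2 1) (@Csq R C1 C2 2).

Definition coker_beta (R : pzRingType) (I : pset R) (C1 C2 : lmodType R)
    (d : {linear C1 -> C2}) (k : int) : subq (C1 * C2)%type :=
  coker_sq (Dt d) (Et I d k 0 1) (Et I d k k (2 - k)).

Definition graded_H2 (R : pzRingType) (I : pset R) (C1 C2 : lmodType R)
    (d : {linear C1 -> C2}) (k : int) : subq (C1 * C2)%type :=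
  SubQ (Ipow_sq I k (H2 d)) (Ipow_sq I (k + 1) (H2 d)).

(* Main.v *)
Require Import Defs.
From HB Require Import structures.
From mathcomp Require Import all_boot all_order all_algebra.
From mathcomp Require Import zify.
Local Open Scope ring_scope.
Import GRing.Theory.
Set Implicit Arguments. Unset Strict Implicit.

Section Helpers.
Variables (R : pzRingType) (I : pset R) (C1 C2 : lmodType R).
Implicit Types (S : pset (C1 * C2)%type).

Lemma pair_eq0 (x : (C1 * C2)%type) : x.1 = 0 -> x.2 = 0 -> x = 0.
Proof. by case: x => a b /= -> ->. Qed.

Lemma IM0 m S : IM I m S 0.
Proof. by exists [::]; split => //; rewrite big_nil. Qed.

Lemma IM_fst0 m (x : (C1 * C2)%type) : IM I m (@Cdeg R C1 C2 2) x -> x.1 = 0.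
Proof.
case=> s [hs ->]; elim: s hs => [|p s IH] hs; first by rewrite big_nil.
rewrite big_cons /=.
have [_ hp] := hs p (mem_head _ _).
rewrite IH; last by move=> q hq; apply: hs; rewrite in_cons hq orbT.
by move: hp; rewrite /Cdeg /= => ->; rewrite scaler0 addr0.
Qed.

Lemma IM_sub m S (x y : (C1 * C2)%type) :
  (forall v, S v -> S (- v)) -> IM I m S x -> IM I m S y -> IM I m S (x - y).
Proof.
move=> hN [s [hs ->]] [t [ht ->]].
exists (s ++ [seq (p.1, - p.2) | p <- t]); split.
  move=> p; rewrite mem_cat => /orP [/hs //|/mapP [q /ht [h1 h2] ->]] /=.
  by split => //; apply: hN.
rewrite big_cat big_map /=; congr (_ + _).
by rewrite -sumrN; apply: eq_bigr => p _; rewrite scalerN.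
Qed.

Lemma IM_mono m m' S x : (forall a, IpowZ I m a -> IpowZ I m' a) ->
  IM I m S x -> IM I m' S x.
Proof.
move=> h [s [hs ->]]; exists s; split => // p /hs [h1 h2]; split => //.
exact: h.
Qed.

Lemma Ipow_0 n : Ipow I n 0.
Proof. by case: n => [//|n]; exists [::]; rewrite big_nil. Qed.

Lemma Ipow_add n a b : Ipow I n a -> Ipow I n b -> Ipow I n (a + b).
Proof.
case: n => [//|n] [s [hs ->]] [t [ht ->]].
exists (s ++ t); split; last by rewrite big_cat.
by move=> p; rewrite mem_cat => /orP [/hs|/ht].
Qed.

Lemma Ipow_mulr n a r : two_sided_ideal I -> Ipow I n a -> Ipow I n (a * r).
Proof.
move=> [_ _ _ hr]; case: n => [//|n] [s [hs ->]].
exists [seq (p.1, p.2 * r) | p <- s]; split.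
  by move=> p /mapP [q /hs [h1 h2] ->] /=; split => //; apply: hr.
by rewrite big_map mulr_suml; apply: eq_bigr => p _; rewrite mulrA.
Qed.

Lemma Ipow_S n a : two_sided_ideal I -> Ipow I n.+1 a -> Ipow I n a.
Proof.
move=> hI; case: n => [//|n] [s [hs ->]].
elim: s hs => [|p s IH] hs; first by rewrite big_nil; apply: Ipow_0.
rewrite big_cons; apply: Ipow_add.
  by have [h1 _] := hs p (mem_head _ _); apply: Ipow_mulr.
by apply: IH => q hq; apply: hs; rewrite in_cons hq orbT.
Qed.

Lemma IpowZ_S (k : nat) a : two_sided_ideal I ->
  IpowZ I (k%:Z + 1) a -> IpowZ I k a.
Proof.
move=> hI; rewrite -PoszD addn1 /=; exact: Ipow_S.
Qed.

End Helpers.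

Theorem propositionA8 (R : pzRingType) (I : pset R) (C1 C2 : lmodType R)
    (d : {linear C1 -> C2}) (k : nat) :
  two_sided_ideal I -> (1 <= k)%N ->
  induces_iso (@idfun (C1 * C2)%type)
              (coker_beta I d k) (graded_H2 I d k).
Proof.
move=> hI _.
have E2 : k%:Z + (2 - k%:Z) = 2 by lia.
have E2' : (k%:Z + 1) + (2 - k%:Z - 1) = 2 by lia.
have E1 : k%:Z + (2 - k%:Z) - 1 = 1 by lia.
have E1' : k%:Z - (k%:Z - 1) = 1 by lia.
have F1 : (0 : int) + 1 = 1 by [].
have F2 : (0 : int) + 1 + 1 = 2 by [].
have Dt0 : forall x : (C1 * C2)%type, x.1 = 0 -> Dt d x = 0.
  by move=> x hx; rewrite /Dt hx linear0.
have DtD : forall u v : (C1 * C2)%type, Dt d (u + v) = Dt d u + Dt d v.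
  move=> u v; rewrite /Dt /= linearD.
  by apply/eqP; rewrite xpair_eqE /= addr0 !eqxx.
have Neg2 : forall v : (C1 * C2)%type, Cdeg 2 v -> Cdeg 2 (- v).
  by rewrite /Cdeg /= => v ->; rewrite oppr0.
split.
- by [].
-
  move=> x [hx _]; rewrite E2 in hx.
  have hx1 := IM_fst0 hx.
  case: hx => s [hs ex]; split => //; exists s; split => //.
  rewrite -ex subrr; split => //; exists 0; split => //.
  by rewrite Dt0 // subr0.
-
  move=> x [hx _] [_ [z [[hz1 hz2] [a [b [[ha1 _] [[_ hb2] hab]]]]]]].
  rewrite E2 in hx; rewrite E2' in ha1; rewrite E1' E1 in hb2.
  have hx1 := IM_fst0 hx; have ha0 := IM_fst0 ha1.
  case: hb2 => z' [_ ->] in hab.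
  case: ha1 => s [hs ea]; split => //; exists s; split => //.
  rewrite -ea; split.
    change ((x - a).1 = 0); change (x.1 - a.1 = 0).
    by rewrite hx1 ha0 subr0.
  exists ((z + z').1, 0); split => //.
  have -> : Dt d ((z + z').1, 0) = Dt d z + Dt d z' by rewrite -DtD.
  have -> : x - a = Dt d z + Dt d z'.
    apply/eqP; rewrite subr_eq; move/eqP: hab; rewrite subr_eq => /eqP ->.
    by rewrite -addrA (addrC (Dt d z')) (addrC _ a).
  by rewrite subrr.
-
  move=> x [hx hx'] [_ [s [hs [_ [z0 [hz0 he]]]]]].
  split; first by split.
  rewrite E2 in hx.
  set S := \sum_(p <- s) p.1 *: p.2 in he.
  have hS : IM I (k%:Z + 1) (Cdeg 2) S by exists s.
  have hS0 := IM_fst0 hS.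
  have eDz : Dt d z0 = x - S by apply/eqP; rewrite eq_sym -subr_eq0 he.
  exists z0; split; first split.
  + rewrite F1; exists [:: (1, z0)]; split.
      by move=> p; rewrite inE => /eqP -> /=.
    by rewrite big_seq1 scale1r.
  + rewrite add0r F2 eDz; apply: IM_sub => //.
    apply: IM_mono hS => a; exact: IpowZ_S hI.
  + exists S, 0; split; last split.
    * split; first by rewrite E2'.
      by rewrite Dt0 //; apply: IM0.
    * split; first by apply: IM0.
      by exists 0; split; [apply: IM0 | rewrite Dt0].
    * by rewrite addr0 eDz opprB addrC subrK.
-
  move=> y [hy [s [hs [hc [z [hz he]]]]]].
  set S := \sum_(p <- s) p.1 *: p.2 in hc he.
  have hS : IM I k (Cdeg 2) S by exists s.
  have hS0 := IM_fst0 hS.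
  exists S; split.
    split; first by rewrite E2.
    by rewrite Dt0 //; apply: IM0.
  split; first by [].
  exists [::]; split => //.
  rewrite big_nil subr0; split => //.
  by exists z.
Qed.
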